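(* Let $\mathbb{F}\in\{\mathbb{R},\mathbb{C}\}$, let $N\ge2$, $M\ge2$ and $1\le Q\le M$ be integers, write $\mathcal{M}=\{1,\dots,M\}$, let $0<\epsilon<1$, and let $\mathbf{H}_1,\dots,\mathbf{H}_M$ be $N\times N$ positive semidefinite matrices (real symmetric if $\mathbb{F}=\mathbb{R}$, Hermitian if $\mathbb{F}=\mathbb{C}$). Let $(\hat{\boldsymbol\beta},\widehat{\mathbf{X}}^{(2)})$ be an optimal solution of (SDP3): maximize $\mathrm{Tr}[\mathbf{X}^{(2)}]$ over $\boldsymbol\beta\in\mathbb{R}^M$ and $N\times N$ matrices $\mathbf{X}^{(2)}\succeq0$ (real symmetric if $\mathbb{F}=\mathbb{R}$, Hermitian if $\mathbb{F}=\mathbb{C}$) subject to $\mathrm{Tr}[\mathbf{H}_i\mathbf{X}^{(2)}]\le\beta_i\epsilon+(1-\beta_i)$ for $i\in\mathcal{M}$, $\sum_{i\in\mathcal{M}}\beta_i=Q$, $0\le\beta_i\le1$. Let $\hat{\boldsymbol\beta}_{[Q]}$ be the $Q$-th largest entry of $\hat{\boldsymbol\beta}$ and $\widehat{\mathcal{I}}=\{i\in\mathcal{M}:\hat{\boldsymbol\beta}[i]\ge\hat{\boldsymbol\beta}_{[Q]}\}$. Then $\hat{\boldsymbol\beta}[i]\ge\frac{1}{M-Q+1}$ for all $i\in\widehat{\mathcal{I}}$.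
   Context: $\hat{\boldsymbol\beta}[i]$ denotes the $i$-th entry of $\hat{\boldsymbol\beta}$. *)

(* Defs.v *)
From HB Require Import structures.
From mathcomp Require Import all_boot all_order all_algebra.
From mathcomp Require Import complex.
Set Implicit Arguments. Unset Strict Implicit. Unset Printing Implicit Defensive.
Import Order.TTheory GRing.Theory Num.Theory.
Local Open Scope ring_scope.

(* Generic setting: scalars beta, eps live in the real field R; matrices have
   entries in F (F = R for the real case, F = R[i] for the complex case),
   cj is the conjugation of F (identity for R), inj : R -> F the embedding. *)

Definition psd (F : numFieldType) (cj : F -> F) (N : nat) (A : 'M[F]_N) : Prop :=
  (map_mx cj A)^T = A /\
  forall x : 'cV[F]_N, 0 <= ((map_mx cj x)^T *m A *m x) ord0 ord0.

Definition sdp3_feasible (R : realFieldType) (F : numFieldType) (cj : F -> F)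
    (inj : R -> F) (N M Q : nat) (eps : R) (H : 'I_M -> 'M[F]_N)
    (beta : 'I_M -> R) (X : 'M[F]_N) : Prop :=
  psd cj X /\
  (forall i, \tr (H i *m X) <= inj (beta i * eps + (1 - beta i))) /\
  \sum_(i < M) beta i = Q%:R /\
  (forall i, 0 <= beta i <= 1).

Definition sdp3_optimal (R : realFieldType) (F : numFieldType) (cj : F -> F)
    (inj : R -> F) (N M Q : nat) (eps : R) (H : 'I_M -> 'M[F]_N)
    (beta : 'I_M -> R) (X : 'M[F]_N) : Prop :=
  sdp3_feasible cj inj Q eps H beta X /\
  forall (beta' : 'I_M -> R) (X' : 'M[F]_N),
    sdp3_feasible cj inj Q eps H beta' X' -> \tr X' <= \tr X.

Definition kth_largest (R : realFieldType) (M : nat) (beta : 'I_M -> R) (Q : nat) : R :=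
  nth 0 (sort (fun x y : R => y <= x) [seq beta i | i <- enum 'I_M]) Q.-1.

Definition Ihat (R : realFieldType) (M : nat) (beta : 'I_M -> R) (Q : nat) : {set 'I_M} :=
  [set i | kth_largest beta Q <= beta i].

Definition lemma3p1_claim (R : realFieldType) (F : numFieldType) (cj : F -> F)
    (inj : R -> F) (N M Q : nat) (eps : R) : Prop :=
  forall (H : 'I_M -> 'M[F]_N) (beta : 'I_M -> R) (X : 'M[F]_N),
    (forall i, psd cj (H i)) ->
    sdp3_optimal cj inj Q eps H beta X ->
    forall i, i \in Ihat beta Q -> 1 / (M - Q + 1)%:R <= beta i.

(* Main.v *)
Require Import Defs.
From HB Require Import structures.
From mathcomp Require Import all_boot all_order all_algebra.
From mathcomp Require Import complex.
Import Order.TTheory GRing.Theory Num.Theory.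
Local Open Scope ring_scope.
Lemma key (R : realFieldType) (M Q : nat) (beta : 'I_M -> R) :
  (1 <= Q <= M)%N -> \sum_(i < M) beta i = Q%:R -> (forall i, 0 <= beta i <= 1) ->
  1 / (M - Q + 1)%:R <=
  nth 0 (sort (fun x y : R => y <= x) [seq beta i | i <- enum 'I_M]) Q.-1.
Proof.
move=> /andP[Q1 QM] hs hb.
set s := sort _ _.
have sz : size s = M by rewrite size_sort size_map size_enum_ord.
have ss : sorted (fun x y : R => y <= x) s.
  by apply: sort_sorted => x y; exact: le_total.
have mem1 : forall j, (j < M)%N -> nth 0 s j <= 1.
  move=> j jM; have : nth 0 s j \in s by rewrite mem_nth // sz.
  rewrite mem_sort => /mapP[k _ ->]; by case/andP: (hb k).
set c := nth 0 s Q.-1.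
have le_c : forall j, (Q.-1 <= j < M)%N -> nth 0 s j <= c.
  move=> j /andP[h1 h2].
  have tr : transitive (fun x y : R => y <= x).
    by move=> x y z /= ? ?; apply: le_trans; eassumption.
  have rf : reflexive (fun x y : R => y <= x) by move=> x /=.
  apply: (sorted_leq_nth tr rf 0 ss) => //.
    by rewrite inE sz; case: (Q) Q1 QM => // q _ /= /leq_trans; apply.
  by rewrite inE sz.
have sumS : \sum_(x <- s) x = Q%:R.
  rewrite (perm_big [seq beta i | i <- enum 'I_M]); last by rewrite perm_sort.
  by rewrite big_map big_enum /=.
move: sumS.
rewrite (big_nth 0) sz (big_cat_nat _ (n:=Q.-1)) //=; last first.
  by apply: leq_trans (leq_pred _) QM.
move=> sumS.
have B1 : \sum_(0 <= i < Q.-1) nth 0 s i <= \sum_(0 <= i < Q.-1) (1 : R).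
  rewrite !big_nat; apply: ler_sum => j /andP[_ hj]; apply: mem1.
  by apply: leq_trans hj (leq_trans (leq_pred _) QM).
have B2 : \sum_(Q.-1 <= i < M) nth 0 s i <= \sum_(Q.-1 <= i < M) c.
  by rewrite !big_nat; apply: ler_sum => j hj; apply: le_c.
rewrite sumr_const_nat in B1; rewrite sumr_const_nat in B2.
have eM : (M - Q.-1 = M - Q + 1)%N.
  by rewrite addn1 -subSn //; case: (Q) Q1 => // q _; rewrite subSS.
rewrite eM subn0 in B2 B1.
have pos : 0 < (M - Q + 1)%:R :> R by rewrite ltr0n addn1.
rewrite ler_pdivrMr //.
have : Q%:R <= (Q.-1)%:R + c *+ (M - Q + 1) :> R.
  by rewrite -sumS; apply: lerD.
have -> : Q%:R = (Q.-1)%:R + 1 :> R by rewrite natr1 prednK.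
rewrite lerD2l -mulr_natr.
by rewrite mul1r mulr_natr.
Qed.

Theorem lemma3p1 (R : rcfType) (N M Q : nat) (eps : R) :
  (2 <= N)%N -> (2 <= M)%N -> (1 <= Q <= M)%N -> 0 < eps < 1 ->
  (* F = R : real symmetric matrices *)
  lemma3p1_claim (F := R) id id N M Q eps /\
  (* F = C = R[i] : Hermitian matrices *)
  lemma3p1_claim (F := R[i]) (@conjc R) (fun r : R => (r%:C)%C) N M Q eps.
Proof.
move=> _ _ hQ _; split => H beta X _ [[_ [_ [hs hb]]] _] i;
  rewrite inE => hi; apply: le_trans hi; exact: key.
Qed.
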